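(* The closure, in the norm of $C_0^2(\Omega,\mathcal{S}^{d\times d})$, of the set $$\{\phi\in C_c^\infty(\Omega,\mathcal{S}^{d\times d}):\ |\phi(x)|_r\le\alpha_0(x),\ |\operatorname{div}\phi(x)|_r\le\alpha_1(x)\ \forall x\in\Omega\}$$ equals the set $$\{\psi\in C_0^2(\Omega,\mathcal{S}^{d\times d}):\ |\psi(x)|_r\le\alpha_0(x),\ |\operatorname{div}\psi(x)|_r\le\alpha_1(x)\ \forall x\in\Omega\}.$$
   Context: Let $d\ge 2$ and let $\Omega\subset\mathbb{R}^d$ be a bounded open set with Lipschitz boundary. $\mathcal{S}^{d\times d}$ denotes the space of real symmetric $d\times d$ matrices. Fix $1\le r\le\infty$; $|\cdot|_r$ denotes the $\ell^r$ norm on $\mathbb{R}^d$ and the $\ell^r$ norm of the entries on $\mathcal{S}^{d\times d}$. For $\phi$ with values in $\mathcal{S}^{d\times d}$, $(\operatorname{div}\phi)_i=\sum_{j=1}^d\partial_{x_j}\phi_{ij}$. Let $\alpha_0,\alpha_1\in C(\overline\Omega)$ with $\alpha_0(x),\alpha_1(x)>\underline\alpha$ for all $x\in\Omega$, for some constant $\underline\alpha>0$. $C_0^2(\Omega,\mathcal{S}^{d\times d})$ denotes the closure of $C_c^\infty(\Omega,\mathcal{S}^{d\times d})$ with respect to the norm $\|\phi\|_{C^2}=\sum_{|\beta|\le 2}\sup_{x\in\Omega}|\partial^\beta\phi(x)|$. *)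

(* Defs.v *)
From Stdlib Require Import Reals Lra.
Open Scope R_scope.

(** Points of R^d are functions [nat -> R]; only coordinates [k < d] matter,
    and points of R^d are required to vanish at coordinates [k >= d]. *)
Definition pt := nat -> R.
(** Matrix values: only entries [i j < d] matter. *)
Definition Mat := nat -> nat -> R.

Definition inRd (d : nat) (x : pt) : Prop := forall k, (d <= k)%nat -> x k = 0.

Fixpoint rsum (n : nat) (f : nat -> R) : R :=
  match n with O => 0 | S m => rsum m f + f m end.
Fixpoint rmax (n : nat) (f : nat -> R) : R :=
  match n with O => 0 | S m => Rmax (rmax m f) (f m) end.

Definition near (d : nat) (x y : pt) (del : R) : Prop :=
  forall k, (k < d)%nat -> Rabs (y k - x k) < del.

Inductive exponent : Type := Fin (p : R) | Inf.
Definition valid_exponent (r : exponent) : Prop :=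
  match r with Fin p => 1 <= p | Inf => True end.

(** a^y for a >= 0, with 0^y = 0 (y > 0). *)
Definition rpow0 (a y : R) : R := if Rle_dec a 0 then 0 else Rpower a y.

Definition lr_vec (r : exponent) (d : nat) (v : nat -> R) : R :=
  match r with
  | Fin p => rpow0 (rsum d (fun i => rpow0 (Rabs (v i)) p)) (/ p)
  | Inf => rmax d (fun i => Rabs (v i))
  end.

Definition lr_mat (r : exponent) (d : nat) (A : Mat) : R :=
  match r with
  | Fin p => rpow0 (rsum d (fun i => rsum d (fun j => rpow0 (Rabs (A i j)) p))) (/ p)
  | Inf => rmax d (fun i => rmax d (fun j => Rabs (A i j)))
  end.

Definition mnorm (d : nat) (A : Mat) : R := rsum d (fun i => rsum d (fun j => Rabs (A i j))).

Definition upd (x : pt) (i : nat) (t : R) : pt :=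
  fun k => if Nat.eqb k i then x k + t else x k.

Definition has_pderiv (U : pt -> Prop) (f : pt -> R) (i : nat) (g : pt -> R) : Prop :=
  forall x, U x -> derivable_pt_lim (fun t => f (upd x i t)) 0 (g x).

Definition cont_on (d : nat) (U : pt -> Prop) (f : pt -> R) : Prop :=
  forall x, U x -> forall eps, 0 < eps -> exists del, 0 < del /\
    forall y, U y -> near d x y del -> Rabs (f y - f x) < eps.

Definition is_open (d : nat) (U : pt -> Prop) : Prop :=
  (forall x, U x -> inRd d x) /\
  forall x, U x -> exists del, 0 < del /\
    forall y, inRd d y -> near d x y del -> U y.

Definition bounded_set (d : nat) (U : pt -> Prop) : Prop :=
  exists M, forall x, U x -> forall k, (k < d)%nat -> Rabs (x k) <= M.

Definition closure (d : nat) (U : pt -> Prop) (x : pt) : Prop :=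
  inRd d x /\ forall del, 0 < del -> exists y, U y /\ near d x y del.

Definition boundary (d : nat) (U : pt -> Prop) (x : pt) : Prop :=
  closure d U x /\ ~ U x.

(** Lipschitz boundary: near each boundary point x0, after an orthogonal change
    of coordinates z = Q (y - x0), U is (inside a cylinder) the region below
    the graph z_{d-1} < g(z_0,...,z_{d-2}) of a Lipschitz function g. *)
Definition orthogonal (d : nat) (Q : Mat) : Prop :=
  forall i j, (i < d)%nat -> (j < d)%nat ->
    rsum d (fun m => Q i m * Q j m) = if Nat.eqb i j then 1 else 0.

Definition lipschitz_boundary (d : nat) (U : pt -> Prop) : Prop :=
  forall x0, boundary d U x0 ->
  exists (Q : Mat) (rho h L : R) (g : pt -> R),
    orthogonal d Q /\ 0 < rho /\ 0 < h /\ 0 <= L /\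
    (forall a b, Rabs (g a - g b) <= L * rmax (d - 1) (fun k => Rabs (a k - b k))) /\
    (forall a, near (d - 1) (fun _ => 0) a rho -> Rabs (g a) < h) /\
    forall y, inRd d y ->
      let z := fun k => rsum d (fun m => Q k m * (y m - x0 m)) in
      near (d - 1) (fun _ => 0) z rho -> Rabs (z (d - 1)%nat) < h ->
      (U y <-> z (d - 1)%nat < g z).

Definition symmetric_field (d : nat) (U : pt -> Prop) (phi : pt -> Mat) : Prop :=
  forall x, U x -> forall i j, (i < d)%nat -> (j < d)%nat -> phi x i j = phi x j i.

(** smooth: all iterated partial derivatives exist and are continuous on U;
    D l is the derivative along the list of directions l. *)
Definition smooth_on (d : nat) (U : pt -> Prop) (f : pt -> R) : Prop :=
  exists D : list nat -> pt -> R,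
    (forall x, U x -> D nil x = f x) /\
    (forall l i, (i < d)%nat -> has_pderiv U (D l) i (D (cons i l))) /\
    (forall l, cont_on d U (D l)).

(** compact support in U (U bounded): f vanishes on the points of U that are
    within some positive distance del of the complement of U in R^d. *)
Definition compact_support_in (d : nat) (U : pt -> Prop) (f : pt -> R) : Prop :=
  exists del, 0 < del /\
    forall x, U x -> (exists y, inRd d y /\ ~ U y /\ near d x y del) -> f x = 0.

Definition in_Ccinf (d : nat) (U : pt -> Prop) (phi : pt -> Mat) : Prop :=
  symmetric_field d U phi /\
  forall a b, (a < d)%nat -> (b < d)%nat ->
    smooth_on d U (fun x => phi x a b) /\ compact_support_in d U (fun x => phi x a b).

(** ||h||_{C^2} < eps, with ||h|| = sum_{|beta|<=2} sup_{x in U} |d^beta h(x)|;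
    multi-indices: beta = 0, e_i (i<d), e_i + e_j (i <= j < d). *)
Definition c2_small (d : nat) (U : pt -> Prop) (h : pt -> Mat) (eps : R) : Prop :=
  exists (D1 : nat -> pt -> Mat) (D2 : nat -> nat -> pt -> Mat),
    (forall i a b, (i < d)%nat -> (a < d)%nat -> (b < d)%nat ->
       has_pderiv U (fun x => h x a b) i (fun x => D1 i x a b)) /\
    (forall i j a b, (i < d)%nat -> (j < d)%nat -> (a < d)%nat -> (b < d)%nat ->
       has_pderiv U (fun x => D1 i x a b) j (fun x => D2 i j x a b)) /\
    exists (M0 : R) (M1 : nat -> R) (M2 : nat -> nat -> R),
      (forall x, U x -> mnorm d (h x) <= M0) /\
      (forall i x, (i < d)%nat -> U x -> mnorm d (D1 i x) <= M1 i) /\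
      (forall i j x, (i <= j)%nat -> (j < d)%nat -> U x -> mnorm d (D2 i j x) <= M2 i j) /\
      M0 + rsum d M1 + rsum d (fun i => rsum d (fun j => if Nat.leb i j then M2 i j else 0))
        < eps.

Definition mdiff (phi psi : pt -> Mat) : pt -> Mat := fun x i j => phi x i j - psi x i j.

(** psi in C_0^2(U, S^{dxd}): the C^2-closure of C_c^infty(U, S^{dxd}) *)
Definition in_C02 (d : nat) (U : pt -> Prop) (psi : pt -> Mat) : Prop :=
  forall eps, 0 < eps -> exists phi, in_Ccinf d U phi /\ c2_small d U (mdiff psi phi) eps.

(** pointwise constraints |phi(x)|_r <= a0(x), |div phi(x)|_r <= a1(x) on U,
    where (div phi)_i = sum_j d_j phi_ij *)
Definition constrained (d : nat) (U : pt -> Prop) (r : exponent) (a0 a1 : pt -> R)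
  (phi : pt -> Mat) : Prop :=
  exists D1 : nat -> pt -> Mat,
    (forall j a b, (j < d)%nat -> (a < d)%nat -> (b < d)%nat ->
       has_pderiv U (fun x => phi x a b) j (fun x => D1 j x a b)) /\
    forall x, U x ->
      lr_mat r d (phi x) <= a0 x /\
      lr_vec r d (fun i => rsum d (fun j => D1 j x i j)) <= a1 x.

(* Main.v *)
Require Import Defs.
From Stdlib Require Import Reals Lra Lia Classical ClassicalEpsilon List FunctionalExtensionality.
From Coquelicot Require Import Compactness.
Open Scope R_scope.

Lemma rpow0_ge0 a y : 0 <= rpow0 a y.
Proof. unfold rpow0; destruct (Rle_dec a 0). lra. unfold Rpower; left; apply exp_pos. Qed.

Lemma rpow0_0 a y : a <= 0 -> rpow0 a y = 0.
Proof. intro; unfold rpow0; destruct (Rle_dec a 0); [reflexivity|lra]. Qed.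

Lemma rpow0_pos a y : 0 < a -> rpow0 a y = Rpower a y.
Proof. intro; unfold rpow0; destruct (Rle_dec a 0); [lra|reflexivity]. Qed.

Lemma rpow0_mono a b y : 0 <= a <= b -> 0 <= y -> rpow0 a y <= rpow0 b y.
Proof.
  intros [Ha Hb] Hy. destruct (Rle_dec a 0).
  - rewrite rpow0_0 by lra. apply rpow0_ge0.
  - rewrite !rpow0_pos by lra. apply Rle_Rpower_l; lra.
Qed.

Lemma rpow0_mult a b y : 0 <= a -> 0 <= b -> rpow0 (a*b) y = rpow0 a y * rpow0 b y.
Proof.
  intros Ha Hb. destruct (Req_dec a 0) as [->|Ha'].
  - rewrite Rmult_0_l, !(rpow0_0 0) by lra. ring.
  - destruct (Req_dec b 0) as [->|Hb'].
    + rewrite Rmult_0_r, !(rpow0_0 0) by lra. ring.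
    + rewrite !rpow0_pos by (try apply Rmult_lt_0_compat; lra).
      rewrite Rpower_mult_distr; lra.
Qed.

Lemma rpow0_inv a y : 0 <= a -> 0 < y -> rpow0 (rpow0 a y) (/y) = a /\ rpow0 (rpow0 a (/y)) y = a.
Proof.
  intros Ha Hy. destruct (Req_dec a 0) as [->|Ha'].
  - rewrite !(rpow0_0 0) by lra. split; lra.
  - rewrite !(rpow0_pos a) by lra.
    assert (0 < Rpower a y) by (unfold Rpower; apply exp_pos).
    assert (0 < Rpower a (/y)) by (unfold Rpower; apply exp_pos).
    rewrite !rpow0_pos by lra. rewrite !Rpower_mult.
    rewrite Rinv_r, Rinv_l by lra. split; apply Rpower_1; lra.
Qed.

Lemma rpow0_1 y : rpow0 1 y = 1.
Proof. rewrite rpow0_pos by lra. unfold Rpower. rewrite ln_1, Rmult_0_r. apply exp_0. Qed.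

Lemma rpow0_superadd a b p : 0 <= a -> 0 <= b -> 1 <= p -> rpow0 a p + rpow0 b p <= rpow0 (a+b) p.
Proof.
  intros Ha Hb Hp. destruct (Req_dec a 0) as [->|Ha'].
  - rewrite (rpow0_0 0) by lra. rewrite !Rplus_0_l. lra.
  - destruct (Req_dec b 0) as [->|Hb'].
    + rewrite (rpow0_0 0) by lra. rewrite !Rplus_0_r. lra.
    + rewrite !rpow0_pos by lra.
      replace p with (1 + (p-1)) by ring. rewrite !Rpower_plus, !Rpower_1 by lra.
      assert (Rpower a (p-1) <= Rpower (a+b) (p-1)) by (apply Rle_Rpower_l; lra).
      assert (Rpower b (p-1) <= Rpower (a+b) (p-1)) by (apply Rle_Rpower_l; lra).
      nra.
Qed.

Lemma rpow0_rootsub X Y p : 0 <= X -> 0 <= Y -> 1 <= p ->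
  rpow0 (X+Y) (/p) <= rpow0 X (/p) + rpow0 Y (/p).
Proof.
  intros HX HY Hp. set (A := rpow0 X (/p)). set (B := rpow0 Y (/p)).
  assert (HA: 0 <= A) by apply rpow0_ge0. assert (HB: 0 <= B) by apply rpow0_ge0.
  assert (EA: rpow0 A p = X) by (apply (rpow0_inv X p); lra).
  assert (EB: rpow0 B p = Y) by (apply (rpow0_inv Y p); lra).
  apply Rle_trans with (rpow0 (rpow0 (A+B) p) (/p)).
  - apply rpow0_mono. split. lra. rewrite <- EA, <- EB. apply rpow0_superadd; lra.
    left; apply Rinv_0_lt_compat; lra.
  - right. apply rpow0_inv; lra.
Qed.

Lemma rpow0_max a b p : 0 <= a -> 0 <= b -> 0 <= p -> rpow0 (Rmax a b) p <= rpow0 a p + rpow0 b p.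
Proof.
  intros. pose proof (rpow0_ge0 a p). pose proof (rpow0_ge0 b p).
  apply Rmax_case; lra.
Qed.

Lemma rsum_mono n f g : (forall k, (k < n)%nat -> f k <= g k) -> rsum n f <= rsum n g.
Proof. induction n; simpl; intros H. lra. assert (f n <= g n) by (apply H; lia).
  assert (rsum n f <= rsum n g) by (apply IHn; intros; apply H; lia). lra. Qed.
Lemma rsum_add n f g : rsum n (fun k => f k + g k) = rsum n f + rsum n g.
Proof. induction n; simpl. ring. rewrite IHn. ring. Qed.
Lemma rsum_scal n c f : rsum n (fun k => c * f k) = c * rsum n f.
Proof. induction n; simpl. ring. rewrite IHn. ring. Qed.
Lemma rsum_ext n f g : (forall k, (k < n)%nat -> f k = g k) -> rsum n f = rsum n g.
Proof. intros; apply Rle_antisym; apply rsum_mono; intros; rewrite H; lra || lia. Qed.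
Lemma rsum_const n c : rsum n (fun _ => c) = INR n * c.
Proof. induction n; simpl rsum. simpl; ring. rewrite IHn, S_INR; ring. Qed.
Lemma rsum_ge0 n f : (forall k, (k < n)%nat -> 0 <= f k) -> 0 <= rsum n f.
Proof. intros. rewrite <- (Rmult_0_l (rsum n f)), <- rsum_scal. apply rsum_mono. intros; rewrite Rmult_0_l; auto. Qed.
Lemma rsum_ge n f k : (forall k, (k < n)%nat -> 0 <= f k) -> (k < n)%nat -> f k <= rsum n f.
Proof. induction n; intros H Hk. lia. simpl. destruct (Nat.eq_dec k n) as [->|].
  - assert (0 <= rsum n f) by (apply rsum_ge0; intros; apply H; lia). lra.
  - assert (f k <= rsum n f) by (apply IHn; [intros; apply H; lia| lia]).
    assert (0 <= f n) by (apply H; lia). lra. Qed.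
Lemma rsum_abs n f : Rabs (rsum n f) <= rsum n (fun k => Rabs (f k)).
Proof. induction n; simpl. rewrite Rabs_R0; lra.
  eapply Rle_trans. apply Rabs_triang. lra. Qed.

Lemma rmax_mono n f g : (forall k, (k < n)%nat -> f k <= g k) -> rmax n f <= rmax n g.
Proof. induction n; simpl; intros H. lra. assert (f n <= g n) by (apply H; lia).
  assert (rmax n f <= rmax n g) by (apply IHn; intros; apply H; lia).
  apply Rmax_lub. eapply Rle_trans; [eauto|apply Rmax_l]. eapply Rle_trans; [eauto|apply Rmax_r]. Qed.
Lemma rmax_ge0 n f : 0 <= rmax n f.
Proof. induction n; simpl. lra. eapply Rle_trans; [eauto|apply Rmax_l]. Qed.
Lemma rmax_scal n c f : 0 <= c -> rmax n (fun k => c * f k) = c * rmax n f.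
Proof. intro Hc; induction n; simpl. ring. rewrite IHn. unfold Rmax.
  destruct (Rle_dec (c * rmax n f) (c * f n)), (Rle_dec (rmax n f) (f n)); try reflexivity.
  - destruct Hc as [Hc|<-]; [|ring]. apply Rmult_le_reg_l in r; [lra|lra].
  - destruct Hc as [Hc|<-]; [|ring]. exfalso; apply n0. apply Rmult_le_compat_l; lra. Qed.
Lemma rmax_add n f g : rmax n (fun k => f k + g k) <= rmax n f + rmax n g.
Proof. induction n; simpl. lra. apply Rmax_lub.
  - eapply Rle_trans; [eauto|]. apply Rplus_le_compat; apply Rmax_l.
  - apply Rplus_le_compat; apply Rmax_r. Qed.
Lemma rmax_ge n f k : (k < n)%nat -> f k <= rmax n f.
Proof. induction n; intros Hk. lia. simpl. destruct (Nat.eq_dec k n) as [->|]. apply Rmax_r.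
  eapply Rle_trans; [apply IHn; lia|apply Rmax_l]. Qed.
Lemma rmax_lt n f c : 0 < c -> (forall k, (k < n)%nat -> f k < c) -> rmax n f < c.
Proof. induction n; simpl; intros Hc H. lra. apply Rmax_case. apply IHn; auto. apply H; lia. Qed.

Section GenF.
Variables (I : Type) (dom : I -> Prop) (S : (I -> R) -> R).
Hypothesis S_mono : forall f g, (forall i, dom i -> f i <= g i) -> S f <= S g.
Hypothesis S_add : forall f g, S (fun i => f i + g i) = S f + S g.
Hypothesis S_scal : forall c f, S (fun i => c * f i) = c * S f.

Lemma S_ext f g : (forall i, dom i -> f i = g i) -> S f = S g.
Proof. intros; apply Rle_antisym; apply S_mono; intros; rewrite H; auto; lra. Qed.
Lemma S_ge0 f : (forall i, dom i -> 0 <= f i) -> 0 <= S f.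
Proof. intros. rewrite <- (Rmult_0_l (S f)), <- S_scal. apply S_mono. intros; rewrite Rmult_0_l; auto. Qed.

Definition normF (p : R) (f : I -> R) := rpow0 (S (fun i => rpow0 (Rabs (f i)) p)) (/p).

Lemma normF_scal p c f : 1 <= p -> 0 <= c -> normF p (fun i => c * f i) = c * normF p f.
Proof.
  intros Hp Hc. unfold normF.
  rewrite (S_ext _ (fun i => rpow0 c p * rpow0 (Rabs (f i)) p)).
  2:{ intros. rewrite Rabs_mult, (Rabs_pos_eq c) by lra. apply rpow0_mult; auto. apply Rabs_pos. }
  rewrite S_scal, rpow0_mult. rewrite (proj1 (rpow0_inv c p Hc ltac:(lra))). reflexivity.
  apply rpow0_ge0. apply S_ge0; intros; apply rpow0_ge0.
Qed.

Lemma normF_P3 p s e u v : 1 <= p -> 0 < s -> 0 <= e ->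
  (forall i, dom i -> Rabs (v i - u i) <= e) ->
  normF p v <= (1+s) * normF p u + (1 + /s) * e * normF p (fun _ => 1).
Proof.
  intros Hp Hs He H. set (c := (1 + /s) * e).
  assert (Hc: 0 <= c). { unfold c. apply Rmult_le_pos; auto. pose proof (Rinv_0_lt_compat s Hs). lra. }
  assert (Hip: 0 < /p) by (apply Rinv_0_lt_compat; lra).
  assert (Hpt: forall i, dom i -> rpow0 (Rabs (v i)) p <=
     rpow0 (1+s) p * rpow0 (Rabs (u i)) p + rpow0 c p * rpow0 (Rabs 1) p).
  { intros i Hi. rewrite Rabs_R1, rpow0_1, Rmult_1_r, <- rpow0_mult by (try apply Rabs_pos; lra).
    eapply Rle_trans; [|apply rpow0_max; try lra].
    2:{ apply Rmult_le_pos. lra. apply Rabs_pos. }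
    apply rpow0_mono; [|lra]. split. apply Rabs_pos.
    pose proof (H i Hi). pose proof (Rabs_triang (v i - u i) (u i)).
    replace (v i - u i + u i) with (v i) in H1 by ring.
    pose proof (Rabs_pos (u i)).
    destruct (Rle_dec (e / s) (Rabs (u i))).
    - eapply Rle_trans; [|apply Rmax_l].
      assert (e <= s * Rabs (u i)). { unfold Rdiv in r. apply Rmult_le_compat_l with (r := s) in r; [|lra].
        rewrite <- Rmult_assoc, (Rmult_comm s e), Rmult_assoc, Rinv_r, Rmult_1_r in r; lra. }
      lra.
    - eapply Rle_trans; [|apply Rmax_r]. unfold c. unfold Rdiv in n. lra. }
  unfold normF at 1.
  eapply Rle_trans.
  { apply rpow0_mono; [split; [apply S_ge0; intros; apply rpow0_ge0| apply S_mono, Hpt]|lra]. }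
  rewrite S_add, !S_scal.
  eapply Rle_trans. apply rpow0_rootsub; try lra.
  1,2: apply Rmult_le_pos; [apply rpow0_ge0| apply S_ge0; intros; apply rpow0_ge0].
  rewrite !rpow0_mult by (try apply rpow0_ge0; apply S_ge0; intros; apply rpow0_ge0).
  rewrite (proj1 (rpow0_inv (1+s) p ltac:(lra) ltac:(lra))).
  rewrite (proj1 (rpow0_inv c p Hc ltac:(lra))). unfold normF. lra.
Qed.
End GenF.

Section GenM.
Variables (I : Type) (dom : I -> Prop) (M : (I -> R) -> R).
Hypothesis M_mono : forall f g, (forall i, dom i -> f i <= g i) -> M f <= M g.
Hypothesis M_add : forall f g, M (fun i => f i + g i) <= M f + M g.
Hypothesis M_scal : forall c f, 0 <= c -> M (fun i => c * f i) = c * M f.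

Lemma M_ext f g : (forall i, dom i -> f i = g i) -> M f = M g.
Proof. intros; apply Rle_antisym; apply M_mono; intros; rewrite H; auto; lra. Qed.
Lemma M_ge0 f : (forall i, dom i -> 0 <= f i) -> 0 <= M f.
Proof. intros. rewrite <- (Rmult_0_l (M f)), <- M_scal by lra. apply M_mono. intros; rewrite Rmult_0_l; auto. Qed.

Definition normM (f : I -> R) := M (fun i => Rabs (f i)).

Lemma normM_scal c f : 0 <= c -> normM (fun i => c * f i) = c * normM f.
Proof. intros Hc. unfold normM. rewrite <- M_scal by auto. apply M_ext; intros.
  rewrite Rabs_mult, Rabs_pos_eq; lra. Qed.

Lemma normM_P3 s e u v : 0 < s -> 0 <= e ->
  (forall i, dom i -> Rabs (v i - u i) <= e) ->
  normM v <= (1+s) * normM u + (1 + /s) * e * normM (fun _ => 1).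
Proof.
  intros Hs He H. unfold normM at 1.
  eapply Rle_trans. apply (M_mono _ (fun i => Rabs (u i) + e * Rabs 1)).
  { intros i Hi. pose proof (H i Hi). pose proof (Rabs_triang (v i - u i) (u i)).
    replace (v i - u i + u i) with (v i) in H1 by ring. rewrite Rabs_R1; lra. }
  eapply Rle_trans. apply M_add. rewrite M_scal by auto. fold (normM u). fold (normM (fun _ => 1)).
  assert (0 <= normM u) by (apply M_ge0; intros; apply Rabs_pos).
  assert (0 <= normM (fun _ => 1)) by (apply M_ge0; intros; apply Rabs_pos).
  pose proof (Rinv_0_lt_compat s Hs).
  assert (e * normM (fun _ => 1) <= (1 + /s) * e * normM (fun _ => 1)).
  { rewrite Rmult_assoc. rewrite <- (Rmult_1_l (e * _)) at 1. apply Rmult_le_compat_r. apply Rmult_le_pos; lra. lra. }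
  nra.
Qed.
End GenM.

Definition S2 (d : nat) (g : nat * nat -> R) := rsum d (fun i => rsum d (fun j => g (i,j))).
Definition M2 (d : nat) (g : nat * nat -> R) := rmax d (fun i => rmax d (fun j => g (i,j))).
Definition dom2 (d : nat) (ij : nat * nat) := (fst ij < d)%nat /\ (snd ij < d)%nat.

Lemma S2_mono d f g : (forall i, dom2 d i -> f i <= g i) -> S2 d f <= S2 d g.
Proof. intros H. apply rsum_mono; intros; apply rsum_mono; intros. apply H. split; simpl; auto. Qed.
Lemma S2_add d f g : S2 d (fun i => f i + g i) = S2 d f + S2 d g.
Proof. unfold S2. rewrite <- rsum_add. apply rsum_ext; intros. apply rsum_add. Qed.
Lemma S2_scal d c f : S2 d (fun i => c * f i) = c * S2 d f.
Proof. unfold S2. rewrite <- rsum_scal. apply rsum_ext; intros. apply rsum_scal. Qed.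
Lemma M2_mono d f g : (forall i, dom2 d i -> f i <= g i) -> M2 d f <= M2 d g.
Proof. intros H. apply rmax_mono; intros; apply rmax_mono; intros. apply H. split; simpl; auto. Qed.
Lemma M2_add d f g : M2 d (fun i => f i + g i) <= M2 d f + M2 d g.
Proof. unfold M2. eapply Rle_trans; [|apply rmax_add]. apply rmax_mono; intros. apply rmax_add. Qed.
Lemma M2_scal d c f : 0 <= c -> M2 d (fun i => c * f i) = c * M2 d f.
Proof. intros. unfold M2. rewrite <- rmax_scal by auto. apply Rle_antisym; apply rmax_mono; intros;
  rewrite rmax_scal; auto; lra. Qed.
Lemma rsum_mono' d f g : (forall i, (fun k => (k < d)%nat) i -> f i <= g i) -> rsum d f <= rsum d g.
Proof. apply rsum_mono. Qed.
Lemma rmax_mono' d f g : (forall i, (fun k => (k < d)%nat) i -> f i <= g i) -> rmax d f <= rmax d g.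
Proof. apply rmax_mono. Qed.

Lemma lrv_scal r d c v : valid_exponent r -> 0 <= c -> lr_vec r d (fun k => c * v k) = c * lr_vec r d v.
Proof.
  intros Hr Hc. destruct r as [p|]; simpl in Hr.
  - change (normF nat (rsum d) p (fun k => c * v k) = c * normF nat (rsum d) p v).
    exact (normF_scal nat (fun k => (k < d)%nat) (rsum d) (rsum_mono' d) (rsum_scal d) p c v Hr Hc).
  - change (normM nat (rmax d) (fun k => c * v k) = c * normM nat (rmax d) v).
    exact (normM_scal nat (fun k => (k < d)%nat) (rmax d) (rmax_mono' d) (fun c f h => rmax_scal d c f h) c v Hc).
Qed.

Lemma lrv_P3 r d : valid_exponent r -> exists C, 0 <= C /\ forall s e u v, 0 < s -> 0 <= e ->
  (forall k, (k < d)%nat -> Rabs (v k - u k) <= e) ->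
  lr_vec r d v <= (1+s) * lr_vec r d u + (1 + /s) * e * C.
Proof.
  intros Hr. destruct r as [p|]; simpl in Hr.
  - exists (normF nat (rsum d) p (fun _ => 1)). split. apply rpow0_ge0. intros.
    change (normF nat (rsum d) p v <= (1+s) * normF nat (rsum d) p u + (1 + /s) * e * normF nat (rsum d) p (fun _ => 1)).
    exact (normF_P3 nat (fun k => (k < d)%nat) (rsum d) (rsum_mono' d) (rsum_add d) (rsum_scal d) p s e u v Hr H H0 H1).
  - exists (normM nat (rmax d) (fun _ => 1)). split. apply rmax_ge0. intros.
    change (normM nat (rmax d) v <= (1+s) * normM nat (rmax d) u + (1 + /s) * e * normM nat (rmax d) (fun _ => 1)).
    exact (normM_P3 nat (fun k => (k < d)%nat) (rmax d) (rmax_mono' d) (rmax_add d) (fun c f h => rmax_scal d c f h) s e u v H H0 H1).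
Qed.

Lemma lrm_scal r d c (A : Mat) : valid_exponent r -> 0 <= c ->
  lr_mat r d (fun i j => c * A i j) = c * lr_mat r d A.
Proof.
  intros Hr Hc. destruct r as [p|]; simpl in Hr.
  - change (normF (nat*nat) (S2 d) p (fun ij => c * A (fst ij) (snd ij)) = c * normF (nat*nat) (S2 d) p (fun ij => A (fst ij) (snd ij))).
    exact (normF_scal _ (dom2 d) (S2 d) (S2_mono d) (S2_scal d) p c _ Hr Hc).
  - change (normM (nat*nat) (M2 d) (fun ij => c * A (fst ij) (snd ij)) = c * normM (nat*nat) (M2 d) (fun ij => A (fst ij) (snd ij))).
    exact (normM_scal _ (dom2 d) (M2 d) (M2_mono d) (M2_scal d) c _ Hc).
Qed.

Lemma lrm_P3 r d : valid_exponent r -> exists C, 0 <= C /\ forall s e (A B : Mat), 0 < s -> 0 <= e ->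
  (forall i j, (i < d)%nat -> (j < d)%nat -> Rabs (B i j - A i j) <= e) ->
  lr_mat r d B <= (1+s) * lr_mat r d A + (1 + /s) * e * C.
Proof.
  intros Hr. destruct r as [p|]; simpl in Hr.
  - exists (normF _ (S2 d) p (fun _ => 1)). split. apply rpow0_ge0. intros s e A B Hs He H.
    change (normF _ (S2 d) p (fun ij => B (fst ij) (snd ij)) <= (1+s) * normF _ (S2 d) p (fun ij => A (fst ij) (snd ij)) + (1 + /s) * e * normF _ (S2 d) p (fun _ => 1)).
    apply (normF_P3 _ (dom2 d) (S2 d) (S2_mono d) (S2_add d) (S2_scal d)); auto.
    intros [i j] [Hi Hj]; apply H; auto.
  - exists (normM _ (M2 d) (fun _ => 1)). split. apply rmax_ge0. intros s e A B Hs He H.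
    change (normM _ (M2 d) (fun ij => B (fst ij) (snd ij)) <= (1+s) * normM _ (M2 d) (fun ij => A (fst ij) (snd ij)) + (1 + /s) * e * normM _ (M2 d) (fun _ => 1)).
    apply (normM_P3 _ (dom2 d) (M2 d) (M2_mono d) (M2_add d) (M2_scal d)); auto.
    intros [i j] [Hi Hj]; apply H; auto.
Qed.

Lemma upd_inRd d x i t : inRd d x -> (i < d)%nat -> inRd d (upd x i t).
Proof. intros Hx Hi k Hk. unfold upd. destruct (Nat.eqb_spec k i). lia. auto. Qed.

Lemma upd_dist x i t k y : Rabs (y k - upd x i t k) <= Rabs (y k - x k) + Rabs t.
Proof. unfold upd. destruct (Nat.eqb k i).
  - replace (y k - (x k + t)) with ((y k - x k) + - t) by ring. eapply Rle_trans. apply Rabs_triang. rewrite Rabs_Ropp; lra.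
  - pose proof (Rabs_pos t); lra. Qed.

Lemma upd_near d x i t del : 0 < del -> Rabs t < del -> near d x (upd x i t) del.
Proof. intros H1 H2 k Hk. rewrite Rabs_minus_sym. eapply Rle_lt_trans. apply upd_dist. rewrite Rminus_diag, Rabs_R0. lra. Qed.

Lemma open_upd d U x i : is_open d U -> U x -> (i < d)%nat ->
  exists rho, 0 < rho /\ forall t, Rabs t < rho -> U (upd x i t).
Proof. intros [H1 H2] Hx Hi. destruct (H2 x Hx) as [del [Hd Hy]]. exists del; split; auto.
  intros t Ht. apply Hy. apply upd_inRd; auto. apply upd_near; auto. Qed.

Lemma deriv_local (f g : R -> R) l : (exists rho, 0 < rho /\ forall t, Rabs t < rho -> f t = g t) ->
  derivable_pt_lim g 0 l -> derivable_pt_lim f 0 l.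
Proof.
  intros [rho [Hr Hfg]] Hg eps He. destruct (Hg eps He) as [del Hd].
  assert (0 < Rmin del rho) by (apply Rmin_pos; [apply cond_pos|auto]).
  exists (mkposreal _ H). intros h Hh0 Hh. simpl in Hh.
  rewrite (Hfg (0+h)), (Hfg 0). apply Hd; auto. eapply Rlt_le_trans; [eauto|apply Rmin_l].
  rewrite Rabs_R0; auto. rewrite Rplus_0_l. eapply Rlt_le_trans; [eauto|apply Rmin_r].
Qed.

Lemma deriv_zero (f : R -> R) : (exists rho, 0 < rho /\ forall t, Rabs t < rho -> f t = 0) ->
  derivable_pt_lim f 0 0.
Proof. intros H. apply (deriv_local f (fun _ => 0)); auto. apply derivable_pt_lim_const. Qed.

Lemma deriv_lin (f g : R -> R) a b l1 l2 : derivable_pt_lim f 0 l1 -> derivable_pt_lim g 0 l2 ->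
  derivable_pt_lim (fun t => a * f t + b * g t) 0 (a * l1 + b * l2).
Proof. intros H1 H2.
  exact (derivable_pt_lim_plus _ _ _ _ _ (derivable_pt_lim_scal f a 0 l1 H1) (derivable_pt_lim_scal g b 0 l2 H2)).
Qed.

Lemma pderiv_lin U f g i Df Dg a b : has_pderiv U f i Df -> has_pderiv U g i Dg ->
  has_pderiv U (fun x => a * f x + b * g x) i (fun x => a * Df x + b * Dg x).
Proof. intros H1 H2 x Hx. apply (deriv_lin (fun t => f (upd x i t)) (fun t => g (upd x i t))); auto. Qed.

Lemma pderiv_ext U f g i Df Dg : has_pderiv U f i Df -> (forall x, f x = g x) -> (forall x, U x -> Df x = Dg x) ->
  has_pderiv U g i Dg.
Proof. intros H1 H2 H3 x Hx. rewrite <- H3 by auto.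
  apply (deriv_local _ (fun t => f (upd x i t))). exists 1; split; [lra|]; intros; auto. apply H1; auto. Qed.

Lemma pderiv_local d U f g i D : is_open d U -> (forall y, U y -> f y = g y) -> (i < d)%nat ->
  has_pderiv U g i D -> has_pderiv U f i D.
Proof. intros Ho Hfg Hi Hg x Hx. apply (deriv_local _ (fun t => g (upd x i t))); auto.
  destruct (open_upd d U x i Ho Hx Hi) as [rho [Hr Hu]]. exists rho; split; auto. Qed.

Lemma pderiv_unique U f i D1 D2 x : has_pderiv U f i D1 -> has_pderiv U f i D2 -> U x -> D1 x = D2 x.
Proof. intros H1 H2 Hx. eapply uniqueness_limite; [apply H1|apply H2]; auto. Qed.

Lemma smooth_vanish d U f D del : 0 < del -> is_open d U ->
  (forall l i, (i < d)%nat -> has_pderiv U (D l) i (D (cons i l))) ->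
  (forall x, U x -> D nil x = f x) ->
  (forall x, U x -> (exists y, inRd d y /\ ~ U y /\ near d x y del) -> f x = 0) ->
  forall l, Forall (fun i => (i < d)%nat) l ->
  forall x, U x -> (exists y, inRd d y /\ ~ U y /\ near d x y del) -> D l x = 0.
Proof.
  intros Hdel Ho HD Hnil Hsup l Hl. induction Hl as [|i l Hi Hl IH]; intros x Hx Hy.
  - rewrite Hnil by auto. auto.
  - destruct Hy as [y [Hyd [HyU Hn]]].
    set (m := rmax d (fun k => Rabs (y k - x k))).
    assert (Hm: m < del). { apply rmax_lt; auto. }
    eapply uniqueness_limite. apply HD; auto. apply deriv_zero.
    destruct (open_upd d U x i Ho Hx Hi) as [rho [Hr Hu]].
    exists (Rmin rho (del - m)). split. apply Rmin_pos; lra.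
    intros t Ht. apply IH. apply Hu. eapply Rlt_le_trans; [eauto|apply Rmin_l].
    exists y. split; auto. split; auto. intros k Hk.
    eapply Rle_lt_trans. apply upd_dist.
    assert (Rabs (y k - x k) <= m) by (apply (rmax_ge d (fun k => Rabs (y k - x k))); auto).
    assert (Rabs t < del - m) by (eapply Rlt_le_trans; [eauto|apply Rmin_r]). lra.
Qed.

Fixpoint to_tn (n : nat) (f : nat -> R) : Tn n R :=
  match n with O => tt | S n => (f 0%nat, to_tn n (fun k => f (S k))) end.
Fixpoint of_tn (n : nat) : Tn n R -> nat -> R :=
  match n with O => fun _ _ => 0 | S n => fun t k => match k with O => fst t | S k => of_tn n (snd t) k end end.

Lemma of_to n f k : (k < n)%nat -> of_tn n (to_tn n f) k = f k.
Proof. revert f k; induction n; intros f k Hk. lia. destruct k; simpl. reflexivity.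
  rewrite IHn by lia. reflexivity. Qed.
Lemma of_tn_out n t k : (n <= k)%nat -> of_tn n t k = 0.
Proof. revert t k; induction n; intros t k Hk. reflexivity. destruct k. lia. simpl. apply IHn; lia. Qed.
Lemma to_of n t : to_tn n (of_tn n t) = t.
Proof. induction n; destruct t; simpl. reflexivity. f_equal. apply IHn. Qed.
Lemma bounded_to n M f : (forall k, (k < n)%nat -> Rabs (f k) <= M) ->
  bounded_n n (to_tn n (fun _ => -M)) (to_tn n (fun _ => M)) (to_tn n f).
Proof. revert f; induction n; intros f H; simpl. auto. split.
  pose proof (H 0%nat ltac:(lia)). assert (f 0%nat <= Rabs (f 0%nat)) by apply Rle_abs.
  assert (- f 0%nat <= Rabs (f 0%nat)) by (rewrite <- Rabs_Ropp; apply Rle_abs). lra. apply IHn. intros; apply H; lia. Qed.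
Lemma close_to n del f g : close_n n del (to_tn n f) (to_tn n g) -> forall k, (k < n)%nat -> Rabs (f k - g k) < del.
Proof. revert f g; induction n; intros f g H k Hk. lia. simpl in H. destruct H. destruct k. auto.
  apply (IHn (fun k => f (S k)) (fun k => g (S k))); auto; lia. Qed.

Lemma bounded_local d (U : pt -> Prop) (f : pt -> R) :
  (forall x, U x -> inRd d x) -> bounded_set d U ->
  (forall x, inRd d x -> exists del, 0 < del /\ exists K, forall y, U y -> near d x y del -> Rabs (f y) <= K) ->
  exists K, forall y, U y -> Rabs (f y) <= K.
Proof.
  intros HUd [M HM] Hloc.
  assert (H' : forall t : Tn d R, exists p : posreal * R,
     forall y, U y -> near d (of_tn d t) y (pos (fst p)) -> Rabs (f y) <= snd p).
  { intros t. destruct (Hloc (of_tn d t)) as [del [Hd [K HK]]].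
    intros k Hk; apply of_tn_out; auto.
    exists (mkposreal del Hd, K). simpl. auto. }
  set (pf := fun t => proj1_sig (constructive_indefinite_description _ (H' t))).
  assert (Hpf : forall t y, U y -> near d (of_tn d t) y (pos (fst (pf t))) -> Rabs (f y) <= snd (pf t)).
  { intros t. exact (proj2_sig (constructive_indefinite_description _ (H' t))). }
  pose proof (compactness_list d (to_tn d (fun _ => -M)) (to_tn d (fun _ => M)) (fun t => fst (pf t))) as HC.
  destruct (classic (exists K, forall y, U y -> Rabs (f y) <= K)) as [HK|HK]; auto.
  exfalso; apply HC; intros [l Hl]; apply HK.
  set (Kf := fun t => snd (pf t)).
  exists (fold_right (fun t acc => Rmax (Kf t) acc) 0 l).
  assert (Hin: forall t, In t l -> Kf t <= fold_right (fun t acc => Rmax (Kf t) acc) 0 l).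
  { clear. induction l; simpl; intros t Ht. destruct Ht. destruct Ht as [<-|Ht]. apply Rmax_l.
    eapply Rle_trans; [apply IHl; auto|apply Rmax_r]. }
  intros y Hy. destruct (Hl (to_tn d y)) as [t [Ht [Htb Htc]]].
  { apply bounded_to. intros; apply HM; auto. }
  eapply Rle_trans; [|apply (Hin t Ht)]. apply Hpf; auto.
  assert (Htc' : close_n d (fst (pf t)) (to_tn d y) (to_tn d (of_tn d t))) by (rewrite to_of; auto). intros k Hk. apply (close_to d _ y (of_tn d t)); auto.
Qed.

Lemma fin_bound N (P : nat -> R -> Prop) : (forall n K K', K <= K' -> P n K -> P n K') ->
  (forall n, (n < N)%nat -> exists K, P n K) -> exists K, forall n, (n < N)%nat -> P n K.
Proof. intros Hm H. induction N. exists 0; intros; lia.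
  destruct IHN as [K1 HK1]. intros; apply H; lia. destruct (H N) as [K2 HK2]. lia.
  exists (Rmax K1 K2). intros n Hn. destruct (Nat.eq_dec n N) as [->|].
  eapply Hm; [apply Rmax_r|auto]. eapply Hm; [apply Rmax_l|apply HK1; lia]. Qed.

Lemma fin_bound2 N (P : nat -> nat -> R -> Prop) : (forall i j K K', K <= K' -> P i j K -> P i j K') ->
  (forall i j, (i < N)%nat -> (j < N)%nat -> exists K, P i j K) ->
  exists K, forall i j, (i < N)%nat -> (j < N)%nat -> P i j K.
Proof. intros Hm H.
  destruct (fin_bound N (fun i K => forall j, (j < N)%nat -> P i j K)) as [K HK].
  - intros n K K' HK Hp j Hj. eapply Hm; eauto.
  - intros i Hi. apply fin_bound. intros; eapply Hm; eauto. intros; apply H; auto.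
  - exists K; intros; apply HK; auto. Qed.

Lemma smooth_bounded d U f D del : is_open d U -> bounded_set d U -> 0 < del ->
  (forall x, U x -> D nil x = f x) ->
  (forall l i, (i < d)%nat -> has_pderiv U (D l) i (D (cons i l))) ->
  (forall l, cont_on d U (D l)) ->
  (forall x, U x -> (exists y, inRd d y /\ ~ U y /\ near d x y del) -> f x = 0) ->
  forall l, Forall (fun i => (i < d)%nat) l -> exists K, forall y, U y -> Rabs (D l y) <= K.
Proof.
  intros Ho Hb Hdel Hnil HD Hc Hs l Hl. apply bounded_local with d; auto.
  apply Ho. intros x Hx. destruct (classic (U x)) as [HU|HU].
  - destruct (Hc l x HU 1 ltac:(lra)) as [del' [Hd' Hy]]. exists del'; split; auto.
    exists (Rabs (D l x) + 1). intros y Hy1 Hy2. specialize (Hy y Hy1 Hy2).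
    pose proof (Rabs_triang (D l y - D l x) (D l x)). replace (D l y - D l x + D l x) with (D l y) in H by ring. lra.
  - exists del; split; auto. exists 0. intros y Hy1 Hy2.
    rewrite (smooth_vanish d U f D del Hdel Ho HD Hnil Hs l Hl y Hy1). rewrite Rabs_R0; lra.
    exists x. split; auto. split; auto. intros k Hk. rewrite Rabs_minus_sym. apply Hy2; auto.
Qed.

Definition Tot d (M0 : R) (M1 : nat -> R) (M2 : nat -> nat -> R) :=
  M0 + rsum d M1 + rsum d (fun i => rsum d (fun j => if Nat.leb i j then M2 i j else 0)).

Definition c2data d (U : pt -> Prop) (h : pt -> Mat) (D1 : nat -> pt -> Mat) (D2 : nat -> nat -> pt -> Mat)
  M0 M1 M2 :=
    (forall i a b, (i < d)%nat -> (a < d)%nat -> (b < d)%nat ->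
       has_pderiv U (fun x => h x a b) i (fun x => D1 i x a b)) /\
    (forall i j a b, (i < d)%nat -> (j < d)%nat -> (a < d)%nat -> (b < d)%nat ->
       has_pderiv U (fun x => D1 i x a b) j (fun x => D2 i j x a b)) /\
      (forall x, U x -> mnorm d (h x) <= M0) /\
      (forall i x, (i < d)%nat -> U x -> mnorm d (D1 i x) <= M1 i) /\
      (forall i j x, (i <= j)%nat -> (j < d)%nat -> U x -> mnorm d (D2 i j x) <= M2 i j).

Lemma c2_small_iff d U h eps : c2_small d U h eps <->
  exists D1 D2 M0 M1 M2, c2data d U h D1 D2 M0 M1 M2 /\ Tot d M0 M1 M2 < eps.
Proof. unfold c2_small, c2data, Tot. split.
  - intros [D1 [D2 [H1 [H2 [M0 [M1 [M2 [H3 [H4 [H5 H6]]]]]]]]]]. exists D1, D2, M0, M1, M2. tauto.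
  - intros [D1 [D2 [M0 [M1 [M2 [[H1 [H2 [H3 [H4 H5]]]] H6]]]]]]. exists D1, D2. split; auto. split; auto.
    exists M0, M1, M2. tauto. Qed.

Lemma mnorm_lin d a b (A B : Mat) : 0 <= a -> 0 <= b ->
  mnorm d (fun i j => a * A i j + b * B i j) <= a * mnorm d A + b * mnorm d B.
Proof. intros Ha Hb. unfold mnorm. rewrite <- !rsum_scal, <- rsum_add. apply rsum_mono; intros.
  rewrite <- !rsum_scal, <- rsum_add. apply rsum_mono; intros.
  eapply Rle_trans. apply Rabs_triang. rewrite !Rabs_mult, !(Rabs_pos_eq a), !(Rabs_pos_eq b) by auto. lra. Qed.

Lemma mnorm_ge0 d A : 0 <= mnorm d A.
Proof. apply rsum_ge0; intros; apply rsum_ge0; intros; apply Rabs_pos. Qed.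

Lemma mnorm_entry d (A : Mat) i j : (i < d)%nat -> (j < d)%nat -> Rabs (A i j) <= mnorm d A.
Proof. intros. unfold mnorm. eapply Rle_trans; [|apply (rsum_ge d (fun i => rsum d (fun j => Rabs (A i j))) i)].
  apply (rsum_ge d (fun j => Rabs (A i j))); auto. intros; apply Rabs_pos.
  intros; apply rsum_ge0; intros; apply Rabs_pos. auto. Qed.

Lemma mnorm_bound d (A : Mat) B : (forall i j, (i < d)%nat -> (j < d)%nat -> Rabs (A i j) <= B) ->
  mnorm d A <= INR d * (INR d * B).
Proof. intros H. unfold mnorm. rewrite <- rsum_const. apply rsum_mono; intros. rewrite <- rsum_const.
  apply rsum_mono; intros; auto. Qed.

Lemma c2data_lin d U h g D1 D2 E1 E2 M0 M1 M2 N0 N1 N2 a b :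
  0 <= a -> 0 <= b ->
  c2data d U h D1 D2 M0 M1 M2 -> c2data d U g E1 E2 N0 N1 N2 ->
  c2data d U (fun x i j => a * h x i j + b * g x i j)
    (fun k x i j => a * D1 k x i j + b * E1 k x i j)
    (fun k l x i j => a * D2 k l x i j + b * E2 k l x i j)
    (a * M0 + b * N0) (fun k => a * M1 k + b * N1 k) (fun k l => a * M2 k l + b * N2 k l).
Proof.
  intros Ha Hb [H1 [H2 [H3 [H4 H5]]]] [G1 [G2 [G3 [G4 G5]]]]. repeat split.
  - intros. apply pderiv_lin; auto.
  - intros. apply pderiv_lin; auto.
  - intros. eapply Rle_trans. apply mnorm_lin; auto. apply Rplus_le_compat; apply Rmult_le_compat_l; auto.
  - intros. eapply Rle_trans. apply mnorm_lin; auto. apply Rplus_le_compat; apply Rmult_le_compat_l; auto.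
  - intros. eapply Rle_trans. apply mnorm_lin; auto. apply Rplus_le_compat; apply Rmult_le_compat_l; auto.
Qed.

Lemma Tot_lin d a b M0 M1 M2 N0 N1 N2 :
  Tot d (a * M0 + b * N0) (fun k => a * M1 k + b * N1 k) (fun k l => a * M2 k l + b * N2 k l)
  = a * Tot d M0 M1 M2 + b * Tot d N0 N1 N2.
Proof. unfold Tot. rewrite rsum_add, !rsum_scal.
  rewrite (rsum_ext d (fun i => rsum d (fun j => if Nat.leb i j then a * M2 i j + b * N2 i j else 0)) (fun i => a * rsum d (fun j => if Nat.leb i j then M2 i j else 0) +
     b * rsum d (fun j => if Nat.leb i j then N2 i j else 0))).
  rewrite rsum_add, !rsum_scal. ring.
  intros. rewrite <- !rsum_scal, <- rsum_add. apply rsum_ext; intros. destruct (Nat.leb k k0); ring.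
Qed.

Lemma c2data_ext d U h g D1 D2 M0 M1 M2 : c2data d U h D1 D2 M0 M1 M2 ->
  (forall x i j, h x i j = g x i j) -> c2data d U g D1 D2 M0 M1 M2.
Proof. intros [H1 [H2 [H3 [H4 H5]]]] He. repeat split; auto.
  - intros i a b Hi Ha Hb. apply (pderiv_ext U (fun x => h x a b) _ i (fun x => D1 i x a b)); [apply H1; auto | intros; apply He | auto].
  - intros. replace (g x) with (h x); auto. extensionality i; extensionality j; auto.
Qed.

Lemma c2data_at d U h D1 D2 M0 M1 M2 x : c2data d U h D1 D2 M0 M1 M2 -> U x ->
  (forall a b, (a < d)%nat -> (b < d)%nat -> Rabs (h x a b) <= Tot d M0 M1 M2) /\
  (forall a, (a < d)%nat -> Rabs (rsum d (fun j => D1 j x a j)) <= Tot d M0 M1 M2).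
Proof.
  intros [H1 [H2 [H3 [H4 H5]]]] Hx.
  assert (HM0 : 0 <= M0) by (pose proof (H3 x Hx); pose proof (mnorm_ge0 d (h x)); lra).
  assert (HM1 : 0 <= rsum d M1) by (apply rsum_ge0; intros k Hk; pose proof (H4 k x Hk Hx); pose proof (mnorm_ge0 d (D1 k x)); lra).
  assert (HM2 : 0 <= rsum d (fun i => rsum d (fun j => if Nat.leb i j then M2 i j else 0))).
  { apply rsum_ge0; intros; apply rsum_ge0; intros. destruct (Nat.leb_spec k k0). pose proof (H5 k k0 x H6 H0 Hx); pose proof (mnorm_ge0 d (D2 k k0 x)); lra. lra. }
  unfold Tot. split.
  - intros a b Ha Hb. eapply Rle_trans. apply (mnorm_entry d (h x) a b); eauto. specialize (H3 x Hx). lra.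
  - intros a Ha. eapply Rle_trans. apply rsum_abs. eapply Rle_trans.
    apply (rsum_mono d _ M1). intros k Hk; eapply Rle_trans; [apply (mnorm_entry d (D1 k x) a k); auto|apply H4; auto]. lra.
Qed.

Lemma lim_le N a C : 0 <= a -> 0 <= C ->
  (forall s e, 0 < s -> 0 < e -> N <= (1+s) * a + (1 + /s) * e * C) -> N <= a.
Proof.
  intros Ha HC H. destruct (Rle_dec N a) as [|Hn]; auto. exfalso.
  set (g := N - a). assert (Hg : 0 < g) by (unfold g; lra).
  set (s := g / (2 * (a+1))). assert (Hs : 0 < s) by (unfold s; apply Rdiv_lt_0_compat; lra).
  set (e := g * s / (4 * (1+s) * (C+1))).
  assert (He : 0 < e) by (unfold e; apply Rdiv_lt_0_compat; [apply Rmult_lt_0_compat; lra| apply Rmult_lt_0_compat; [apply Rmult_lt_0_compat|]; lra]).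
  assert (E1 : s * (2 * (a+1)) = g) by (unfold s; field; lra).
  assert (E2 : (1 + /s) * e * (4 * (C+1)) = g) by (unfold e; field; lra).
  specialize (H s e Hs He). set (q := (1 + /s) * e) in *.
  assert (0 < q) by (unfold q; pose proof (Rinv_0_lt_compat s Hs); nra).
  assert (s * a * 2 < g) by nra. assert (q * C * 4 < g) by nra. unfold g in *. nra.
Qed.

Lemma num_rev t al C : 0 < t -> t <= 1/2 -> 0 < al -> 0 <= C ->
  exists e0, 0 < e0 /\ forall e a N, 0 <= e -> e <= e0 -> al < a ->
    N <= (1+t) * a + (1 + /t) * e * C -> (1-t) * N <= a.
Proof.
  intros Ht Ht2 Hal HC. set (K := (1 + /t) * C).
  assert (HK : 0 <= K) by (unfold K; pose proof (Rinv_0_lt_compat t Ht); nra).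
  exists (t * t * al / (K + 1)). split. apply Rdiv_lt_0_compat; [repeat apply Rmult_lt_0_compat; lra|lra].
  intros e a N He1 He2 Ha HN.
  assert (E : t * t * al / (K + 1) * (K + 1) = t * t * al) by (field; lra).
  assert (e * K <= t * t * al) by nra.
  replace ((1 + /t) * e * C) with (e * K) in HN by (unfold K; ring).
  assert ((1-t) * N <= (1-t) * ((1+t) * a + e * K)) by (apply Rmult_le_compat_l; lra).
  assert (t*t*al < t*t*a) by (apply Rmult_lt_compat_l; nra).
  assert (0 <= e*K) by nra. assert ((1-t)*(e*K) <= e*K) by nra.
  replace ((1-t) * ((1+t) * a + e * K)) with (a - t*t*a + (1-t)*(e*K)) in H1 by ring. lra.
Qed.

Lemma pderiv_scal U f i Df c : has_pderiv U f i Df -> has_pderiv U (fun x => c * f x) i (fun x => c * Df x).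
Proof. intros H x Hx. exact (derivable_pt_lim_scal _ c 0 _ (H x Hx)). Qed.

Lemma cont_scal d U f c : cont_on d U f -> cont_on d U (fun x => c * f x).
Proof. intros H x Hx eps He. destruct (H x Hx (eps / (Rabs c + 1))) as [del [Hd Hy]].
  apply Rdiv_lt_0_compat; [auto| pose proof (Rabs_pos c); lra].
  exists del; split; auto. intros y Hy1 Hy2. specialize (Hy y Hy1 Hy2).
  rewrite <- Rmult_minus_distr_l, Rabs_mult. pose proof (Rabs_pos c).
  assert (Rabs c * Rabs (f y - f x) <= Rabs c * (eps / (Rabs c + 1))) by (apply Rmult_le_compat_l; lra).
  assert (Rabs c * (eps / (Rabs c + 1)) < eps).
  { assert (E : eps / (Rabs c + 1) * (Rabs c + 1) = eps) by (field; lra).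
    assert (0 < eps / (Rabs c + 1)) by (apply Rdiv_lt_0_compat; lra). nra. }
  lra. Qed.

Lemma psi_deriv U psi phi a b j Dh Dp :
  has_pderiv U (fun x => mdiff psi phi x a b) j Dh -> has_pderiv U (fun x => phi x a b) j Dp ->
  has_pderiv U (fun x => psi x a b) j (fun x => Dh x + Dp x).
Proof. intros H1 H2. apply (pderiv_ext U (fun x => 1 * mdiff psi phi x a b + 1 * phi x a b) _ j (fun x => 1 * Dh x + 1 * Dp x)).
  apply pderiv_lin; auto. intros; unfold mdiff; ring. intros; ring. Qed.

Lemma forward d U r a0 a1 psi : valid_exponent r ->
  (exists al, 0 < al /\ forall x, U x -> al < a0 x /\ al < a1 x) ->
  (forall eps, 0 < eps -> exists phi, in_Ccinf d U phi /\ constrained d U r a0 a1 phi /\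
        c2_small d U (mdiff psi phi) eps) ->
  constrained d U r a0 a1 psi.
Proof.
  intros Hr [al [Hal Hlow]] H.
  destruct (H 1 Rlt_0_1) as [phi1 [_ [[Dp [HDp _]] Hs1]]].
  apply c2_small_iff in Hs1 as [Dh [Dh2 [M0 [M1 [M2 [[Hd1 _] _]]]]]].
  assert (Hpsi : forall j a b, (j < d)%nat -> (a < d)%nat -> (b < d)%nat ->
    has_pderiv U (fun x => psi x a b) j (fun x => Dh j x a b + Dp j x a b)).
  { intros j a b Hj Ha Hb. apply (psi_deriv U psi phi1 a b j); auto. }
  exists (fun j x a b => Dh j x a b + Dp j x a b). split; auto.
  intros x Hx. destruct (lrm_P3 r d Hr) as [C [HC HP]]. destruct (lrv_P3 r d Hr) as [C' [HC' HP']].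
  destruct (Hlow x Hx) as [Hl0 Hl1]. split.
  - apply (lim_le _ (a0 x) C). lra. auto. intros s e Hs He.
    destruct (H e He) as [phi [_ [[Dpe [HDpe Hb]] Hse]]].
    apply c2_small_iff in Hse as [Dhe [Dhe2 [N0 [N1 [N2 [Hdat HT]]]]]].
    destruct (c2data_at _ _ _ _ _ _ _ _ x Hdat Hx) as [Hent _].
    eapply Rle_trans. apply (HP s e (phi x) (psi x)); auto. lra.
    intros i j Hi Hj. specialize (Hent i j Hi Hj). unfold mdiff in Hent. lra.
    destruct (Hb x Hx) as [Hb0 _].
    apply Rplus_le_compat_r. apply Rmult_le_compat_l; lra.
  - apply (lim_le _ (a1 x) C'). lra. auto. intros s e Hs He.
    destruct (H e He) as [phi [_ [[Dpe [HDpe Hb]] Hse]]].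
    apply c2_small_iff in Hse as [Dhe [Dhe2 [N0 [N1 [N2 [Hdat HT]]]]]].
    destruct (c2data_at _ _ _ _ _ _ _ _ x Hdat Hx) as [_ Hdiv].
    eapply Rle_trans. apply (HP' s e (fun i => rsum d (fun j => Dpe j x i j))); auto. lra.
    + intros i Hi. rewrite <- (rsum_ext d (fun j => Dhe j x i j + Dpe j x i j)).
      rewrite rsum_add. specialize (Hdiv i Hi). replace (rsum d (fun j => Dhe j x i j) + rsum d (fun j => Dpe j x i j) -
        rsum d (fun j => Dpe j x i j)) with (rsum d (fun j => Dhe j x i j)) by ring. lra.
      intros j Hj. apply (pderiv_unique U (fun x => psi x i j) j (fun x => Dhe j x i j + Dpe j x i j)
        (fun x => Dh j x i j + Dp j x i j) x); auto.
      apply (psi_deriv U psi phi i j j (fun x => Dhe j x i j) (fun x => Dpe j x i j)). apply Hdat; auto. apply HDpe; auto.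
    + destruct (Hb x Hx) as [_ Hb1]. apply Rplus_le_compat_r. apply Rmult_le_compat_l; lra.
Qed.

Lemma psi_c2 d U psi : is_open d U -> bounded_set d U -> in_C02 d U psi ->
  exists P1 P2 Q0 Q1 Q2, c2data d U psi P1 P2 Q0 Q1 Q2.
Proof.
  intros Ho Hbd HC.
  destruct (HC 1 Rlt_0_1) as [phi1 [[Hsym1 Hsm1] Hs1]].
  apply c2_small_iff in Hs1 as [Dh1 [Dh2 [M0 [M1 [M2 [Hdat1 _]]]]]].
  assert (HPhi : forall a b, exists D : list nat -> pt -> R, (a < d)%nat -> (b < d)%nat ->
    (forall x, U x -> D nil x = phi1 x a b) /\
    (forall l i, (i < d)%nat -> has_pderiv U (D l) i (D (cons i l))) /\
    (forall l, cont_on d U (D l)) /\ compact_support_in d U (fun x => phi1 x a b)).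
  { intros a b. destruct (classic ((a < d)%nat /\ (b < d)%nat)) as [[Ha Hb]|Hn].
    - destruct (Hsm1 a b Ha Hb) as [[D [H1 [H2 H3]]] Hcs]. exists D. intros; auto.
    - exists (fun _ _ => 0). intros; exfalso; auto. }
  set (Phi := fun a b => proj1_sig (constructive_indefinite_description _ (HPhi a b))).
  assert (HPhi' : forall a b, (a < d)%nat -> (b < d)%nat ->
    (forall x, U x -> Phi a b nil x = phi1 x a b) /\
    (forall l i, (i < d)%nat -> has_pderiv U (Phi a b l) i (Phi a b (cons i l))) /\
    (forall l, cont_on d U (Phi a b l)) /\ compact_support_in d U (fun x => phi1 x a b)).
  { intros a b. exact (proj2_sig (constructive_indefinite_description _ (HPhi a b))). }
  clearbody Phi.
  assert (HB : exists B, forall a b, (a < d)%nat -> (b < d)%nat ->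
    (forall y, U y -> Rabs (Phi a b nil y) <= B) /\
    (forall i, (i < d)%nat -> forall y, U y -> Rabs (Phi a b (cons i nil) y) <= B) /\
    (forall i j, (i < d)%nat -> (j < d)%nat -> forall y, U y -> Rabs (Phi a b (cons j (cons i nil)) y) <= B)).
  { apply (fin_bound2 d (fun a b B =>
    (forall y, U y -> Rabs (Phi a b nil y) <= B) /\
    (forall i, (i < d)%nat -> forall y, U y -> Rabs (Phi a b (cons i nil) y) <= B) /\
    (forall i j, (i < d)%nat -> (j < d)%nat -> forall y, U y -> Rabs (Phi a b (cons j (cons i nil)) y) <= B))).
    - intros a b K K' HK [H1 [H2 H3]]. split; [|split]; intros; eapply Rle_trans; eauto.
    - intros a b Ha Hb. destruct (HPhi' a b Ha Hb) as [Hn [Hd [Hc [del [Hdel Hs]]]]].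
      pose proof (smooth_bounded d U (fun x => phi1 x a b) (Phi a b) del Ho Hbd Hdel Hn Hd Hc Hs) as sb.
      destruct (sb nil) as [K0 HK0]. constructor.
      destruct (fin_bound d (fun i K => forall y, U y -> Rabs (Phi a b (cons i nil) y) <= K)) as [K1 HK1].
      { intros; eapply Rle_trans; eauto. }
      { intros i Hi; apply sb; repeat constructor; auto. }
      destruct (fin_bound2 d (fun i j K => forall y, U y -> Rabs (Phi a b (cons j (cons i nil)) y) <= K)) as [K2 HK2].
      { intros; eapply Rle_trans; eauto. }
      { intros; apply sb; repeat constructor; auto. }
      exists (Rmax K0 (Rmax K1 K2)). split; [|split]; intros.
      + eapply Rle_trans; [apply HK0; auto|apply Rmax_l].
      + eapply Rle_trans; [apply HK1; auto|]. eapply Rle_trans; [apply Rmax_l|apply Rmax_r].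
      + eapply Rle_trans; [apply HK2; auto|]. eapply Rle_trans; [apply Rmax_r|apply Rmax_r]. }
  destruct HB as [B HB].
  set (ddB := INR d * (INR d * B)).
  assert (Hdatphi : c2data d U phi1 (fun i x a b => Phi a b (cons i nil) x)
     (fun i j x a b => Phi a b (cons j (cons i nil)) x) ddB (fun _ => ddB) (fun _ _ => ddB)).
  { repeat split.
    - intros i a b Hi Ha Hb. destruct (HPhi' a b Ha Hb) as [Hn [Hd _]].
      apply (pderiv_local d U _ (Phi a b nil)); auto. intros; symmetry; auto.
    - intros i j a b Hi Hj Ha Hb. destruct (HPhi' a b Ha Hb) as [Hn [Hd _]]. apply Hd; auto.
    - intros x Hx. apply mnorm_bound. intros a b Ha Hb. destruct (HB a b Ha Hb) as [H1 _].
      destruct (HPhi' a b Ha Hb) as [Hn _]. rewrite <- Hn by auto. auto.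
    - intros i x Hi Hx. apply mnorm_bound. intros a b Ha Hb. destruct (HB a b Ha Hb) as [_ [H2 _]]. auto.
    - intros i j x Hij Hj Hx. apply mnorm_bound. intros a b Ha Hb. destruct (HB a b Ha Hb) as [_ [_ H3]].
      apply H3; auto; lia. }
  pose proof (c2data_lin _ _ _ _ _ _ _ _ _ _ _ _ _ _ 1 1 ltac:(lra) ltac:(lra) Hdat1 Hdatphi) as Hl.
  eexists _, _, _, _, _. eapply c2data_ext. exact Hl. intros; unfold mdiff; ring.
Qed.

Lemma reverse d U r a0 a1 psi : is_open d U -> bounded_set d U -> valid_exponent r ->
  (exists al, 0 < al /\ forall x, U x -> al < a0 x /\ al < a1 x) ->
  in_C02 d U psi -> constrained d U r a0 a1 psi ->
  forall eps, 0 < eps -> exists phi, in_Ccinf d U phi /\ constrained d U r a0 a1 phi /\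
        c2_small d U (mdiff psi phi) eps.
Proof.
  intros Ho Hbd Hr [al [Hal Hlow]] HC [Dps [HDps Hps]] eps Heps.
  destruct (psi_c2 d U psi Ho Hbd HC) as [P1 [P2 [Q0 [Q1 [Q2 Hpsi]]]]].
  set (K := Rabs (Tot d Q0 Q1 Q2)).
  assert (HK : 0 <= K) by apply Rabs_pos.
  set (t := Rmin (1/2) (eps / (2 * (K+1)))).
  assert (Ht0 : 0 < t) by (apply Rmin_pos; [lra|apply Rdiv_lt_0_compat; lra]).
  assert (Ht1 : t <= 1/2) by apply Rmin_l.
  assert (Ht2 : t <= eps / (2 * (K+1))) by apply Rmin_r.
  destruct (lrm_P3 r d Hr) as [C [HC0 HP]]. destruct (lrv_P3 r d Hr) as [C' [HC' HP']].
  destruct (num_rev t al (Rmax C C') Ht0 Ht1 Hal) as [e0 [He0 Hnum]].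
  { eapply Rle_trans; [apply HC0|apply Rmax_l]. }
  set (e := Rmin e0 (eps/2)).
  assert (He : 0 < e) by (apply Rmin_pos; lra).
  assert (He1 : e <= e0) by apply Rmin_l. assert (He2 : e <= eps/2) by apply Rmin_r.
  destruct (HC e He) as [phie [[Hsyme Hsme] Hse]].
  apply c2_small_iff in Hse as [E1 [E2 [N0 [N1 [N2 [Hdate HTe]]]]]].
  assert (HC1 : C <= Rmax C C') by apply Rmax_l. assert (HC2 : C' <= Rmax C C') by apply Rmax_r.
  pose proof (Rinv_0_lt_compat t Ht0) as Hit.
  exists (fun x i j => (1-t) * phie x i j). split; [|split].
  - split.
    + intros x Hx i j Hi Hj. rewrite Hsyme; auto.
    + intros a b Ha Hb. destruct (Hsme a b Ha Hb) as [[D [Dn [Dd Dc]]] [del [Hdel Hs]]]. split.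
      * exists (fun l x => (1-t) * D l x). split; [|split].
        -- intros x Hx. rewrite Dn; auto.
        -- intros l i Hi. apply pderiv_scal. apply Dd; auto.
        -- intros l. apply cont_scal. apply Dc.
      * exists del. split; auto. intros x Hx Hy. rewrite Hs; auto. ring.
  - exists (fun j x a b => (1-t) * Dps j x a b + (-(1-t)) * E1 j x a b). split.
    + intros j a b Hj Ha Hb.
      apply (pderiv_ext U (fun x => (1-t) * psi x a b + (-(1-t)) * mdiff psi phie x a b) _ j
        (fun x => (1-t) * Dps j x a b + (-(1-t)) * E1 j x a b)).
      apply pderiv_lin. apply HDps; auto. apply Hdate; auto. intros; unfold mdiff; ring. auto.
    + intros x Hx. destruct (Hlow x Hx) as [Hl0 Hl1]. destruct (Hps x Hx) as [Hp0 Hp1].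
      destruct (c2data_at _ _ _ _ _ _ _ _ x Hdate Hx) as [Hent Hdiv].
      split.
      * rewrite lrm_scal by (auto; lra). apply (Hnum e); auto; try lra.
        eapply Rle_trans. apply (HP t e (psi x) (phie x)); auto; try lra.
        intros i j Hi Hj. specialize (Hent i j Hi Hj). unfold mdiff in Hent. rewrite Rabs_minus_sym. lra.
        assert (0 <= (1 + /t) * e) by nra.
        assert ((1+t) * lr_mat r d (psi x) <= (1+t) * a0 x) by (apply Rmult_le_compat_l; lra).
        assert ((1 + /t) * e * C <= (1 + /t) * e * Rmax C C') by (apply Rmult_le_compat_l; lra). lra.
      * replace (fun i => rsum d (fun j => (1-t) * Dps j x i j + (-(1-t)) * E1 j x i j))
          with (fun i => (1-t) * (rsum d (fun j => Dps j x i j) - rsum d (fun j => E1 j x i j))).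
        2:{ extensionality i. rewrite rsum_add, !rsum_scal. ring. }
        rewrite lrv_scal by (auto; lra). apply (Hnum e); auto; try lra.
        eapply Rle_trans. apply (HP' t e (fun i => rsum d (fun j => Dps j x i j))); auto; try lra.
        intros i Hi. specialize (Hdiv i Hi).
        replace (rsum d (fun j => Dps j x i j) - rsum d (fun j => E1 j x i j) - rsum d (fun j => Dps j x i j))
          with (- rsum d (fun j => E1 j x i j)) by ring. rewrite Rabs_Ropp. lra.
        assert (0 <= (1 + /t) * e) by nra.
        assert ((1+t) * lr_vec r d (fun i => rsum d (fun j => Dps j x i j)) <= (1+t) * a1 x) by (apply Rmult_le_compat_l; lra).
        assert ((1 + /t) * e * C' <= (1 + /t) * e * Rmax C C') by (apply Rmult_le_compat_l; lra). lra.
  - apply c2_small_iff.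
    pose proof (c2data_lin _ _ _ _ _ _ _ _ _ _ _ _ _ _ (1-t) t ltac:(lra) ltac:(lra) Hdate Hpsi) as Hl.
    eexists _, _, _, _, _. split. eapply c2data_ext. exact Hl. intros; unfold mdiff; ring.
    rewrite Tot_lin.
    assert ((1-t) * Tot d N0 N1 N2 < (1-t) * (eps/2)) by (apply Rmult_lt_compat_l; lra).
    assert (t * Tot d Q0 Q1 Q2 <= t * K) by (apply Rmult_le_compat_l; [lra|apply Rle_abs]).
    assert (t * K <= eps / (2 * (K+1)) * K) by (apply Rmult_le_compat_r; lra).
    assert (E : eps / (2 * (K+1)) * (K + 1) = eps / 2) by (field; lra).
    assert (0 < eps / (2 * (K+1))) by (apply Rdiv_lt_0_compat; lra).
    nra.
Qed.

Theorem mainTheorem2 (d : nat) (Omega : pt -> Prop) (r : exponent) (alpha0 alpha1 : pt -> R)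
  (hd : (2 <= d)%nat)
  (hopen : is_open d Omega) (hbdd : bounded_set d Omega) (hlip : lipschitz_boundary d Omega)
  (hr : valid_exponent r)
  (hc0 : cont_on d (closure d Omega) alpha0) (hc1 : cont_on d (closure d Omega) alpha1)
  (hlow : exists al, 0 < al /\ forall x, Omega x -> al < alpha0 x /\ al < alpha1 x) :
  forall psi : pt -> Mat,
    (* psi lies in the C^2-closure of the constrained C_c^infty set *)
    (forall eps, 0 < eps -> exists phi,
        in_Ccinf d Omega phi /\ constrained d Omega r alpha0 alpha1 phi /\
        c2_small d Omega (mdiff psi phi) eps)
    <->
    (in_C02 d Omega psi /\ constrained d Omega r alpha0 alpha1 psi).
Proof.
  intros psi. split.
  - intros H. split.
    + intros eps He. destruct (H eps He) as [phi [H1 [_ H3]]]. eauto.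
    + apply forward; auto.
  - intros [HC Hcon]. apply reverse; auto.
Qed.
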